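(* For each integer $n \ge 0$ let $L_n(x)$ denote the $n$-th Laguerre polynomial, $L_n(x) = \sum_{k=0}^{n} (-1)^k \binom{n}{k} \frac{x^k}{k!}$. Let $T$ be the linear transformation on the real vector space $\mathbb{R}[x]$ of real polynomials defined by $T(x^n) = L_n(x)$ for all $n \ge 0$, extended linearly. Then $T$ preserves real-rootedness: if $f \in \mathbb{R}[x]$ has all of its roots real, then $T(f)$ has all of its roots real.
   Context: A real polynomial is said to have all real roots (to be real-rooted) if every one of its complex roots is real. A linear transformation on polynomials preserves real-rootedness if it maps every polynomial with all real roots to a polynomial with all real roots. *)

(* Defs.v *)
From HB Require Import structures.
From mathcomp Require Import all_boot all_order all_algebra.
From mathcomp Require Import reals.
From mathcomp.real_closed Require Import complex.
Set Implicit Arguments. Unset Strict Implicit. Unset Printing Implicit Defensive.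
Import Order.TTheory GRing.Theory Num.Theory.
Local Open Scope ring_scope.

Definition laguerre (R : realType) (n : nat) : {poly R} :=
  \poly_(k < n.+1) ((-1) ^+ k * 'C(n, k)%:R / (k`!)%:R).

Definition laguerreT (R : realType) (f : {poly R}) : {poly R} :=
  \sum_(i < size f) f`_i *: laguerre R i.

Definition real_rooted (R : realType) (f : {poly R}) : Prop :=
  forall z : R[i], root (map_poly (real_complex R) f) z -> complex.Im z = 0.

(* Main.v *)
Require Import Defs.
From HB Require Import structures.
From mathcomp Require Import all_boot all_order all_algebra.
From mathcomp Require Import reals.
From mathcomp.real_closed Require Import complex.
From mathcomp Require Import ring lra.
Set Implicit Arguments. Unset Strict Implicit. Unset Printing Implicit Defensive.
Import Order.TTheory GRing.Theory Num.Theory.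
Local Open Scope ring_scope.
Section S.
Variable R : realType.
Local Notation C := R[i].

Lemma cmulE (a b c d : R) : (Complex a b) * (Complex c d) = Complex (a*c - b*d) (a*d + b*c) :> C.
Proof. by []. Qed.
Lemma caddE (a b c d : R) : (Complex a b) + (Complex c d) = Complex (a+c) (b+d) :> C.
Proof. by []. Qed.
Lemma csubE (a b c d : R) : (Complex a b) - (Complex c d) = Complex (a-c) (b-d) :> C.
Proof. by []. Qed.

Lemma sqr_gt0 (x : R) : x != 0 -> 0 < x ^+ 2.
Proof. by move=> h; rewrite lt0r sqr_ge0 andbT expf_eq0 negb_and h orbT. Qed.

Definition imc (u v : C) : R := complex.Im u * complex.Re v - complex.Re u * complex.Im v.

Definition rrC (p : {poly C}) := forall z, root p z -> complex.Im z = 0.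

Lemma prod_neg (rs : seq C) (z : C) : (forall r, r \in rs -> complex.Im r = 0) ->
  complex.Im z != 0 ->
  let P := \prod_(r <- rs) ('X - r%:P) in
  P.[z] != 0 /\ imc (P^`().[z]) (P.[z]) * complex.Im z <= 0 /\
  (rs != [::] -> imc (P^`().[z]) (P.[z]) * complex.Im z < 0).
Proof.
move=> Hr Hz; elim: rs Hr => [|r rs IH] Hr /=.
  by rewrite big_nil hornerC oner_eq0 derivC horner0 /imc /= !mul0r subr0 mul0r lexx.
have [HQ [HQle _]] := IH (fun x hx => Hr x (mem_behead (s:=r::rs) hx)).
have Hr0 : complex.Im r = 0 by apply: Hr; rewrite inE eqxx.
rewrite big_cons derivM derivXsubC mul1r !hornerE /=.
move: HQ HQle.
set Q := \prod_(j <- rs) _.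
clear IH; move: (Q.[z]) (Q^`().[z]) => q q'.
case: z Hz => x y /= Hy; case: r Hr0 Hr => r1 r2 /= -> _.
case: q => c d; case: q' => a b /= HQ HQle.
have cd : 0 < c^+2 + d^+2.
  have : (c != 0) || (d != 0).
    apply: contraNT HQ; rewrite negb_or !negbK => /andP[/eqP-> /eqP->]; by [].
  case/orP => h.
    have := sqr_gt0 h; have := sqr_ge0 d; lra.
  have := sqr_gt0 h; have := sqr_ge0 c; lra.
have yy : 0 < y^+2 by apply: sqr_gt0.
have key : imc (Complex c d + Complex (x - r1) (y - 0) * Complex a b) (Complex (x - r1) (y - 0) * Complex c d) * y
  = - (y^+2) * (c^+2 + d^+2) + ((x - r1)^+2 + y^+2) * ((b * c - a * d) * y).
  rewrite /imc !cmulE !caddE /=; ring.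
have HQle' : (b * c - a * d) * y <= 0 by move: HQle; rewrite /imc.
have h2 : ((x - r1)^+2 + y^+2) * ((b * c - a * d) * y) <= 0.
  apply: mulr_ge0_le0 => //; have := sqr_ge0 (x - r1); lra.
have h3 : 0 < y^+2 * (c^+2 + d^+2) by apply: mulr_gt0.
split; last split.
- rewrite cmulE; apply/eqP => /eqP; rewrite eq_complex /= => /andP[/eqP e1 /eqP e2].
  have : (y - 0) * (c^+2 + d^+2) = 0.
    have -> : (y - 0) * (c^+2 + d^+2) = (x - r1) * ((x - r1) * d + (y - 0) * c) * 0 + 
          ((x - r1) * d + (y - 0) * c) * c - ((x - r1) * c - (y - 0) * d) * d by ring.
    by rewrite e1 e2; ring.
  move/eqP; rewrite mulf_eq0 subr0 => /orP[/eqP y0|/eqP cd0].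
    by move: yy; rewrite y0 expr0n /= ltxx.
  by move: cd; rewrite cd0 ltxx.
- move: key; rewrite !subr0 => key; rewrite csubE subr0 key; lra.
- move: key; rewrite !subr0 => key _; rewrite csubE subr0 key; lra.
Qed.

Lemma stepL (g : {poly C}) (w : C) : rrC g -> complex.Im w = 0 -> w != 0 ->
  rrC (g^`() - w *: g).
Proof.
move=> hg hw w0 z; rewrite /root !hornerE => /eqP H.
apply/eqP; apply: contraT => Hz.
have [gz|gz] := eqVneq g.[z] 0; first by rewrite (hg z) ?eqxx // in Hz; apply/rootP.
have [rs Hrs] := closed_field_poly_normal g.
set c := lead_coef g in Hrs.
set P := \prod_(r <- rs) ('X - r%:P) in Hrs.
have c0 : c != 0.
  by rewrite lead_coef_eq0; apply: contraNneq gz => ->; rewrite horner0.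
have Hroots : forall r, r \in rs -> complex.Im r = 0.
  move=> r hr; apply: hg; rewrite Hrs /root hornerZ.
  by have := root_prod_XsubC rs r; rewrite hr /root => /eqP ->; rewrite mulr0.
have [HP [_ Hlt]] := prod_neg Hroots Hz.
rewrite -/P in HP Hlt.
have HPd : P^`().[z] = w * P.[z].
  move: H; rewrite Hrs derivZ !hornerZ => /eqP; rewrite subr_eq0 => /eqP H.
  apply: (mulfI c0); by rewrite H mulrCA.
case: (eqVneq rs [::]) => hrs.
  move: HPd; rewrite /P hrs big_nil derivC horner0 hornerC mulr1 => /esym/eqP.
  by rewrite (negbTE w0).
have := Hlt hrs; rewrite HPd.
move: (P.[z]) => p; clear H; case: w hw {w0 HPd} => w1 w2 /= ->; case: p => p1 p2.
rewrite cmulE /imc /=.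
have -> : (w1 * p2 + 0 * p1) * p1 - (w1 * p1 - 0 * p2) * p2 = 0 by ring.
by rewrite mul0r ltxx.
Qed.

Definition Aop (K : nzRingType) (r h : {poly K}) : {poly K} :=
  \sum_(j < size h) r`_j *: h^`(j).

Lemma Aop_widen (K : nzRingType) (r h : {poly K}) (m : nat) : (size h <= m)%N ->
  Aop r h = \sum_(j < m) r`_j *: h^`(j).
Proof.
move=> hm; rewrite /Aop (big_ord_widen m (fun j => r`_j *: h^`(j)) hm) big_mkcond.
apply: eq_bigr => j _; case: ifP => // /negbT; rewrite -leqNgt => hj.
by rewrite derivn_poly0 ?scaler0.
Qed.

Lemma Aop_mulX (K : nzRingType) (r h : {poly K}) : Aop (r * 'X) h = (Aop r h)^`().
Proof.
rewrite (Aop_widen _ (leqnSn (size h))) big_ord_recl coefMX /= scale0r add0r.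
rewrite /Aop raddf_sum /=; apply: eq_bigr => j _.
by rewrite coefMX /= derivZ add0n.
Qed.

Lemma size_deriv_le (K : nzRingType) (h : {poly K}) : (size h^`() <= size h)%N.
Proof.
have [->|h0] := eqVneq h 0; first by rewrite deriv0.
by apply: ltnW; apply: lt_size_deriv.
Qed.

Lemma Aop_deriv (K : nzRingType) (r h : {poly K}) : Aop r (h^`()) = (Aop r h)^`().
Proof.
rewrite (Aop_widen _ (size_deriv_le h)) /Aop raddf_sum /=; apply: eq_bigr => j _.
by rewrite derivZ -derivSn derivnS.
Qed.

Lemma AopB (K : nzRingType) (p q h : {poly K}) : Aop (p - q) h = Aop p h - Aop q h.
Proof. by rewrite /Aop -sumrB; apply: eq_bigr => j _; rewrite coefB scalerBl. Qed.

Lemma AopD (K : nzRingType) (p q h : {poly K}) : Aop (p + q) h = Aop p h + Aop q h.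
Proof. by rewrite /Aop -big_split; apply: eq_bigr => j _; rewrite coefD scalerDl. Qed.

Lemma AopZ (K : comNzRingType) (a : K) (p h : {poly K}) : Aop (a *: p) h = a *: Aop p h.
Proof. by rewrite /Aop scaler_sumr; apply: eq_bigr => j _; rewrite coefZ scalerA. Qed.

Lemma Aop_sum (K : comNzRingType) (m : nat) (a : nat -> K) (q : nat -> {poly K}) (h : {poly K}) :
  Aop (\sum_(i < m) a i *: q i) h = \sum_(i < m) a i *: Aop (q i) h.
Proof.
elim: m => [|m IH].
  by rewrite !big_ord0 /Aop big1 // => j _; rewrite coef0 scale0r.
by rewrite !big_ord_recr /= AopD AopZ IH.
Qed.

Lemma Aop_const (K : nzRingType) (c : K) (h : {poly K}) : Aop c%:P h = c *: h.
Proof.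
rewrite (Aop_widen _ (leqnSn (size h))) big_ord_recl coefC /= big1 ?addr0 //.
by move=> j _; rewrite coefC /= scale0r.
Qed.

Lemma Aop_XsubC (K : comNzRingType) (r h : {poly K}) (w : K) :
  Aop (r * ('X - w%:P)) h = (Aop r h)^`() - w *: Aop r h.
Proof. by rewrite mulrBr [r * w%:P]mulrC mul_polyC AopB AopZ Aop_mulX. Qed.

Lemma Aop_mulXn (K : nzRingType) (r h : {poly K}) (k : nat) :
  Aop (r * 'X^k) h = Aop r (h^`(k)).
Proof.
elim: k => [|k IH]; first by rewrite expr0 mulr1 derivn0.
by rewrite exprSr mulrA Aop_mulX IH -Aop_deriv derivnS.
Qed.

Lemma AopZh (K : comNzRingType) (a : K) (r h : {poly K}) : Aop r (a *: h) = a *: Aop r h.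
Proof.
rewrite (Aop_widen r (size_scale_leq a h)) /Aop scaler_sumr.
by apply: eq_bigr => j _; rewrite derivnZ scalerA mulrC -scalerA.
Qed.

Lemma lemmaB (r h : {poly C}) : r.[0] != 0 -> (forall z, root r z -> complex.Im z = 0) ->
  rrC h -> rrC (Aop r h).
Proof.
move=> r0 rr hh.
have [n] := ubnP (size r); elim: n r r0 rr => // n IH r r0 rr.
rewrite ltnS => hn.
have [s1|s1] := eqVneq (size r) 1.
  move/eqP: s1 => /size_poly1P[c c0 rc].
  rewrite rc Aop_const => z; rewrite /root hornerZ mulf_eq0 (negbTE c0) /=.
  exact: hh.
have [w rw] := closed_rootP r s1.
have := rw; rewrite root_factor_theorem => /divpK rE.
set r' := r %/ ('X - w%:P) in rE.
have w0 : w != 0 by apply/eqP => w0; move: rw r0; rewrite w0 /root => ->.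
have hw : complex.Im w = 0 by apply: rr.
have r'0 : r'.[0] != 0.
  by move: r0; rewrite -rE hornerM mulf_eq0 negb_or => /andP[].
have rr' : forall z, root r' z -> complex.Im z = 0.
  by move=> z hz; apply: rr; rewrite -rE rootM hz.
have r'nz : r' != 0 by apply: contraNneq r'0 => ->; rewrite horner0.
have sr : (size r' < n)%N.
  move: hn; rewrite -rE size_mul ?polyXsubC_eq0 // size_XsubC addn2 /=.
  by [].
rewrite -rE Aop_XsubC.
by apply: stepL => //; apply: IH.
Qed.

Lemma Aop_Xn (K : nzRingType) (k : nat) (h : {poly K}) : Aop 'X^k h = h^`(k).
Proof. by rewrite -[X in Aop X _]mul1r Aop_mulXn -polyC1 Aop_const scale1r. Qed.

Lemma Lag_Aop (i : nat) : Aop (('X - 1)^+i) ('X^i) = i`!%:R *: laguerre R i.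
Proof.
have -> : ('X - 1 : {poly R})^+i = \sum_(k < i.+1) ((-1)^+k * 'C(i,k)%:R) *: 'X^(i - k).
  rewrite exprDn; apply: eq_bigr => k _.
  rewrite -scaler_nat mulrC.
  have -> : ((-1)^+k : {poly R}) = ((-1)^+k)%:P by rewrite rmorphXn /= polyCN polyC1.
  by rewrite mul_polyC scalerA mulrC.
rewrite (@Aop_sum _ i.+1 (fun k => (-1)^+k * 'C(i,k)%:R) (fun k => 'X^(i-k))) /laguerre poly_def scaler_sumr; apply: eq_bigr => k _.
have hk : (k <= i)%N by rewrite -ltnS.
rewrite Aop_Xn derivnXn subKn // -scaler_nat !scalerA; congr (_ *: _).
have := ffact_fact (leq_subr k i); rewrite subKn // => hf.
rewrite -hf natrM.
have : (k`!%:R : R) != 0 by rewrite pnatr_eq0 -lt0n fact_gt0.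
move=> hk0; field; exact: hk0.
Qed.

Lemma termAop (n i : nat) : (i <= n)%N ->
  Aop ('X^(n-i) * ('X - 1)^+i) 'X^n = n`!%:R *: laguerre R i.
Proof.
move=> hi; rewrite mulrC Aop_mulXn derivnXn subKn // -scaler_nat AopZh Lag_Aop scalerA -natrM.
by have := ffact_fact (leq_subr i n); rewrite subKn // => ->.
Qed.

Definition Pf (f : {poly R}) : {poly R} :=
  \sum_(i < size f) f`_i *: ('X^((size f).-1 - i) * ('X - 1)^+i).

Lemma identity (f : {poly R}) : Aop (Pf f) 'X^((size f).-1) = ((size f).-1)`!%:R *: laguerreT f.
Proof.
rewrite /Pf (@Aop_sum _ (size f) (fun i => f`_i) (fun i => 'X^((size f).-1 - i) * ('X - 1)^+i)).
rewrite /laguerreT scaler_sumr; apply: eq_bigr => i _.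
rewrite termAop; last by case: (size f) i => [[]|m] //= i; rewrite -ltnS.
by rewrite !scalerA mulrC.
Qed.

Local Notation rc := (real_complex R).

Lemma map_Aop (r h : {poly R}) :
  map_poly rc (Aop r h) = Aop (map_poly rc r) (map_poly rc h).
Proof.
rewrite /Aop size_map_poly rmorph_sum /=; apply: eq_bigr => j _.
by rewrite map_polyZ coef_map derivn_map.
Qed.

Lemma rrC_Xn (n : nat) : rrC 'X^n.
Proof.
move=> z; rewrite /root hornerXn expf_eq0 => /andP[_ /eqP ->]; by [].
Qed.

Lemma rrC_scale (c : C) (p : {poly C}) : c != 0 -> rrC (c *: p) -> rrC p.
Proof. by move=> c0 h z hz; apply: h; rewrite /root hornerZ (eqP hz) mulr0. Qed.

Lemma Pf_map (f : {poly R}) : map_poly rc (Pf f) =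
  \sum_(i < size f) rc f`_i *: ('X^((size f).-1 - i) * ('X - 1)^+i).
Proof.
rewrite /Pf rmorph_sum /=; apply: eq_bigr => i _.
by rewrite map_polyZ rmorphM !rmorphXn /= rmorphB /= map_polyX rmorph1.
Qed.

Lemma Pf0 (f : {poly R}) : f != 0 -> (map_poly rc (Pf f)).[0] != 0.
Proof.
move=> f0; rewrite Pf_map horner_sum.
have sf := polySpred f0; move: sf; set n := (size f).-1 => sf.
rewrite sf big_ord_recr /= big1 ?add0r.
  rewrite hornerZ hornerM hornerXn subnn expr0 mul1r horner_exp !hornerE.
  apply: mulf_neq0; last by rewrite signr_eq0.
  rewrite fmorph_eq0 -[n]/((size f).-1) -lead_coefE lead_coef_eq0 //.
move=> i _; rewrite hornerZ hornerM hornerXn expr0n.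
by rewrite subn_eq0 leqNgt ltn_ord /= mul0r mulr0.
Qed.

Lemma Pf_roots (f : {poly R}) : real_rooted f -> forall z, root (map_poly rc (Pf f)) z -> complex.Im z = 0.
Proof.
move=> hf z hz.
have f0 : f != 0.
  apply/eqP => f0; have := hf 'i; rewrite f0 map_poly0 root0 => /(_ isT) /=.
  by move/eqP; rewrite oner_eq0.
have z0 : z != 0.
  by apply/eqP => z0; move: hz; rewrite z0 /root (negbTE (Pf0 f0)).
have key : (map_poly rc (Pf f)).[z] = z ^+ (size f).-1 * (map_poly rc f).[1 - z^-1].
  rewrite Pf_map horner_sum horner_coef size_map_poly mulr_sumr; apply: eq_bigr => i _.
  have hi : (i <= (size f).-1)%N by rewrite -ltnS prednK ?ltn_ord // lt0n size_poly_eq0.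
  rewrite coef_map hornerZ hornerM hornerXn !hornerE.
  rewrite -(subnK hi) exprD -[in RHS](subnK hi) addnK.
  have -> : z - 1 = z * (1 - z^-1) by rewrite mulrBr mulr1 mulfV.
  rewrite exprMn; have e : forall a b c d : C, (a * b) * (c * d) = (b * c) * a * d by move=> *; ring.
  exact: e.
move: hz; rewrite /root key mulf_eq0 expf_eq0 (negbTE z0) andbF /= => hr.
have := hf _ hr.
case: z z0 {key hr} => a b z0 /=.
rewrite sub0r opprK => hb.
apply/eqP; apply: contraT => b0.
have n2 : 0 < a ^+ 2 + b ^+ 2 by have := sqr_gt0 b0; have := sqr_ge0 a; lra.
have : b / (a ^+ 2 + b ^+ 2) != 0 by apply: mulf_neq0 => //; rewrite invr_eq0; exact: lt0r_neq0.
by rewrite hb eqxx.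
Qed.

Lemma main (f : {poly R}) : real_rooted f -> real_rooted (laguerreT f).
Proof.
move=> hf.
have f0 : f != 0.
  apply/eqP => f0; have := hf 'i; rewrite f0 map_poly0 root0 => /(_ isT) /=.
  by move/eqP; rewrite oner_eq0.
set n := (size f).-1.
have hn : (n`!%:R : C) != 0 by rewrite pnatr_eq0 -lt0n fact_gt0.
apply: (rrC_scale hn).
have -> : (n`!%:R : C) *: map_poly rc (laguerreT f) = map_poly rc (n`!%:R *: laguerreT f).
  by rewrite map_polyZ rmorph_nat.
rewrite -identity map_Aop map_polyXn.
apply: lemmaB; [exact: Pf0 | exact: Pf_roots | exact: rrC_Xn].
Qed.
End S.

Theorem mainTheorem1 (R : realType) (f : {poly R}) :
  real_rooted f -> real_rooted (laguerreT f).
Proof. exact: main. Qed.
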